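(* There exist $\mu_\lambda\in\overline{\mathbb Q}$ $(\lambda\in\Lambda)$ with $\mu_\lambda^3=\lambda$ such that $\sum_{\lambda\in\Lambda}c_\lambda\mu_\lambda=0$. Likewise, there exist $\eta_\lambda\in\overline{\mathbb Q}$ $(\lambda\in\Lambda)$ with $\eta_\lambda^3=\lambda$ such that $\sum_{\lambda\in\Lambda}c_\lambda\eta_\lambda^{-5}=0$.
   Context: $\Lambda=\{\lambda_1,\lambda_2,\lambda_3\}\subset\overline{\mathbb Q}$ is the set of roots of $P(X)=X^3-X^2-X-1$, and $c_\lambda=\lambda P'(\lambda)^{-1}$ for $\lambda\in\Lambda$ (so that the Tribonacci numbers are $T(n)=\sum_{\lambda\in\Lambda}c_\lambda\lambda^n$). *)

(* Defs.v *)
(* algC serves as the algebraic closure of Q. *)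
From mathcomp Require Import all_boot all_order all_algebra all_field.
Set Implicit Arguments. Unset Strict Implicit. Unset Printing Implicit Defensive.
Import Order.TTheory GRing.Theory Num.Theory.
Local Open Scope ring_scope.

Definition Ptrib : {poly algC} := 'X^3 - 'X^2 - 'X - 1.

Definition ctrib (l : algC) : algC := l * ((Ptrib^`()).[l])^-1.

(* Main.v *)
Require Import Defs.
From mathcomp Require Import all_boot all_order all_algebra all_field.
From mathcomp Require Import ring.
Import GRing.Theory Num.Theory.
Local Open Scope ring_scope.

Lemma L0 (x : algC) : x^+3 - x^+2 - x - 1 = 0 -> 3*x^+2 - 2*x - 1 != 0.
Proof.
move=> hP; apply/eqP => hq.
have h8 : 8 * x = -10.
  apply/eqP; rewrite -subr_eq0 opprK; apply/eqP.
  transitivity (3*(x*(3*x^+2 - 2*x - 1) - 3*(x^+3 - x^+2 - x - 1)) - (3*x^+2 - 2*x - 1)); first ring.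
  by rewrite hP hq; ring.
have E : 64 * (3*x^+2 - 2*x - 1) = 3*(8*x)^+2 - 16*(8*x) - 64 by ring.
rewrite hq h8 mulr0 in E.
have F : (396%:R : algC) = 3*(-10)^+2 - 16*(-10) - 64 by ring.
by move: F; rewrite -E => /eqP; rewrite pnatr_eq0.
Qed.

Arguments L0 {x}.

Lemma rootP3 (a b c : algC) : a+b+c = 1 -> a*b+a*c+b*c = -1 -> a*b*c = 1 ->
  a^+3 - a^+2 - a - 1 = 0.
Proof.
move=> h1 h2 h3.
transitivity (a^+2*((a+b+c) - 1) - a*((a*b+a*c+b*c)+1) + (a*b*c - 1)); first ring.
by rewrite h1 h2 h3; ring.
Qed.

Arguments rootP3 {a b c}.

Lemma qfac (a b c : algC) : a+b+c = 1 -> a*b+a*c+b*c = -1 ->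
  3*a^+2 - 2*a - 1 = (a-b)*(a-c).
Proof.
move=> h1 h2.
transitivity ((a-b)*(a-c) + 2*a*((a+b+c)-1) - ((a*b+a*c+b*c)+1)); first ring.
by rewrite h1 h2; ring.
Qed.

Arguments qfac {a b c}.

Lemma dist3 (a b c : algC) : a+b+c = 1 -> a*b+a*c+b*c = -1 -> a*b*c = 1 -> a != b.
Proof.
move=> h1 h2 h3; apply/eqP => hab.
have := L0 (rootP3 h1 h2 h3); rewrite (qfac h1 h2) hab subrr mul0r.
by rewrite eqxx.
Qed.
Lemma cub_coef (A B C A' B' C' : algC) :
  'X^3 - A%:P * 'X^2 + B%:P * 'X - C%:P = 'X^3 - A'%:P * 'X^2 + B'%:P * 'X - C'%:P ->
  [/\ A = A', B = B' & C = C'].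
Proof.
move=> h; split.
- have := congr1 (fun p : {poly algC} => p`_2) h. rewrite !coefB !coefD !coefN !coefCM !coefXn !coefX !coefC /=.
  move=> /eqP; rewrite -subr_eq0 => /eqP e; apply/eqP; rewrite eq_sym -subr_eq0; apply/eqP; rewrite -e; ring.
- have := congr1 (fun p : {poly algC} => p`_1) h. rewrite !coefB !coefD !coefN !coefCM !coefXn !coefX !coefC /=.
  move=> /eqP; rewrite -subr_eq0 => /eqP e; apply/eqP; rewrite -subr_eq0; apply/eqP; rewrite -e; ring.
- have := congr1 (fun p : {poly algC} => p`_0) h. rewrite !coefB !coefD !coefN !coefCM !coefXn !coefX !coefC /=.
  move=> /eqP; rewrite -subr_eq0 => /eqP e; apply/eqP; rewrite eq_sym -subr_eq0; apply/eqP; rewrite -e; ring.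
Qed.

Lemma dP x : (Ptrib^`()).[x] = 3 * x^+2 - 2 * x - 1.
Proof. rewrite /Ptrib !derivE !hornerD !hornerN !hornerMn !hornerXn !hornerC.
change (3.-1)%N with 2%N; change (2.-1)%N with 1%N. ring. Qed.

Lemma expand3 (a b c : algC) : \prod_(z <- [:: a; b; c]) ('X - z%:P) =
  'X^3 - (a+b+c)%:P * 'X^2 + (a*b+a*c+b*c)%:P * 'X - (a*b*c)%:P.
Proof. rewrite !big_cons big_nil !rmorphD !rmorphM /=. ring. Qed.

Lemma cube_roots : exists u1 u2 u3 t : algC, t^+3 = 2 /\
  [/\ u1 + u2 + u3 = t^+2, u1*u2 + u1*u3 + u2*u3 = t & u1*u2*u3 = 1].
Proof.
pose t : algC := 3.-root 2.
have ht : t^+3 = 2 by rewrite /t rootCK.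
pose q : {poly algC} := - (t^+2)%:P * 'X^2 + t%:P * 'X - (1:algC)%:P.
have sq : (size q < size ('X^3 : {poly algC}))%N.
  rewrite size_polyXn ltnS /q.
  apply: leq_trans (size_polyD _ _) _; rewrite geq_max; apply/andP; split.
    apply: leq_trans (size_polyD _ _) _; rewrite geq_max; apply/andP; split.
      apply: leq_trans (size_mul_leq _ _) _; rewrite size_polyN size_polyC size_polyXn; by case: (_ != 0).
    apply: leq_trans (size_mul_leq _ _) _; rewrite size_polyC size_polyX; by case: (_ != 0).
  by rewrite size_polyN size_polyC; case: (_ != 0).
have [r hr] := closed_field_poly_normal ('X^3 + q).
rewrite lead_coefDl // lead_coefXn scale1r in hr.
have hs := size_prod_XsubC r (fun z => z).
rewrite -hr size_addl // size_polyXn in hs.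
case: r hr hs => [|u1 [|u2 [|u3 [|? ?]]]] //= hr _.
exists u1, u2, u3, t; split => //.
apply: cub_coef; rewrite -expand3 -hr /q; ring.
Qed.

Theorem mainTheorem5 (rs : seq algC)
  (hrs : Ptrib = \prod_(z <- rs) ('X - z%:P)) :
  (exists mu : algC -> algC,
     (forall l, l \in rs -> mu l ^+ 3 = l) /\
     \sum_(l <- rs) ctrib l * mu l = 0) /\
  (exists eta : algC -> algC,
     (forall l, l \in rs -> eta l ^+ 3 = l) /\
     \sum_(l <- rs) ctrib l * (eta l) ^- 5 = 0).
Proof.
have [u1 [u2 [u3 [t [ht [h1 h2 h3]]]]]] := cube_roots.
have s1 : u1^+3 + u2^+3 + u3^+3 = 1.
  transitivity ((u1+u2+u3)^+3 - 3*(u1+u2+u3)*(u1*u2+u1*u3+u2*u3) + 3*(u1*u2*u3)); first ring.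
  rewrite h1 h2 h3. transitivity ((t^+3)^+2 - 3*t^+3 + 3); first ring. by rewrite ht; ring.
have s2 : u1^+3*u2^+3 + u1^+3*u3^+3 + u2^+3*u3^+3 = -1.
  transitivity ((u1*u2+u1*u3+u2*u3)^+3 - 3*(u1+u2+u3)*(u1*u2+u1*u3+u2*u3)*(u1*u2*u3) + 3*(u1*u2*u3)^+2); first ring.
  rewrite h1 h2 h3. transitivity (t^+3 - 3*t^+3 + 3); first ring. by rewrite ht; ring.
have s3 : u1^+3*u2^+3*u3^+3 = 1.
  transitivity ((u1*u2*u3)^+3); first ring. by rewrite h3 expr1n.
have hP : Ptrib = \prod_(z <- [:: u1^+3; u2^+3; u3^+3]) ('X - z%:P).
  by rewrite expand3 s1 s2 s3 /Ptrib polyCN !polyC1; ring.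
have hperm := prod_XsubC_eq (etrans (esym hrs) hP).
have d12 : u1^+3 != u2^+3 := @dist3 _ _ _ s1 s2 s3.
have d13 : u1^+3 != u3^+3.
  by apply: (@dist3 (u1^+3) (u3^+3) (u2^+3)); [rewrite -s1|rewrite -s2|rewrite -s3]; ring.
have d23 : u2^+3 != u3^+3.
  by apply: (@dist3 (u2^+3) (u3^+3) (u1^+3)); [rewrite -s1|rewrite -s2|rewrite -s3]; ring.
have q1 := qfac s1 s2.
have q2 : 3*(u2^+3)^+2 - 2*u2^+3 - 1 = (u2^+3 - u1^+3)*(u2^+3 - u3^+3).
  by apply: qfac; [rewrite -s1|rewrite -s2]; ring.
have q3 : 3*(u3^+3)^+2 - 2*u3^+3 - 1 = (u3^+3 - u1^+3)*(u3^+3 - u2^+3).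
  by apply: qfac; [rewrite -s1|rewrite -s2]; ring.
pose mu l := if l == u1^+3 then u1 else if l == u2^+3 then u2 else u3.
have mu1 : mu (u1^+3) = u1 by rewrite /mu eqxx.
have mu2 : mu (u2^+3) = u2 by rewrite /mu eq_sym (negbTE d12) eqxx.
have mu3 : mu (u3^+3) = u3 by rewrite /mu eq_sym (negbTE d13) eq_sym (negbTE d23).
have hmu : forall l, l \in rs -> mu l ^+ 3 = l.
  by move=> l; rewrite (perm_mem hperm) !inE => /or3P [] /eqP ->; rewrite ?mu1 ?mu2 ?mu3.
have nz1 : u1 != 0 by apply/eqP => e; move: h3; rewrite e !mul0r => /eqP; rewrite eq_sym oner_eq0.
have nz2 : u2 != 0 by apply/eqP => e; move: h3; rewrite e mulr0 mul0r => /eqP; rewrite eq_sym oner_eq0.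
have nz3 : u3 != 0 by apply/eqP => e; move: h3; rewrite e mulr0 => /eqP; rewrite eq_sym oner_eq0.
have e12 : u1^+3 - u2^+3 != 0 by rewrite subr_eq0.
have e13 : u1^+3 - u3^+3 != 0 by rewrite subr_eq0.
have e23 : u2^+3 - u3^+3 != 0 by rewrite subr_eq0.
have e21 : u2^+3 - u1^+3 != 0 by rewrite subr_eq0 eq_sym.
have e31 : u3^+3 - u1^+3 != 0 by rewrite subr_eq0 eq_sym.
have e32 : u3^+3 - u2^+3 != 0 by rewrite subr_eq0 eq_sym.
split; exists mu; split => //;
  rewrite (perm_big _ hperm) /= !big_cons big_nil /ctrib !dP mu1 mu2 mu3 q1 q2 q3.
- transitivity ((u1^+4*(u2^+3-u3^+3) - u2^+4*(u1^+3-u3^+3) + u3^+4*(u1^+3-u2^+3)) /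
    ((u1^+3-u2^+3)*(u1^+3-u3^+3)*(u2^+3-u3^+3))).
    by field; rewrite ?e12 ?e13 ?e23 ?e21 ?e31 ?e32.
  rewrite (_ : u1^+4*(u2^+3-u3^+3) - u2^+4*(u1^+3-u3^+3) + u3^+4*(u1^+3-u2^+3) =
    (u1-u2)*(u1-u3)*(u2-u3)*((u1*u2+u1*u3+u2*u3)^+2 - (u1+u2+u3)*(u1*u2*u3))); last by ring.
  by rewrite h1 h2 h3 mulr1 subrr mulr0 mul0r.
- transitivity (((u2*u3)^+2*(u2^+3-u3^+3) - (u1*u3)^+2*(u1^+3-u3^+3) + (u1*u2)^+2*(u1^+3-u2^+3)) /
    ((u1*u2*u3)^+2 * ((u1^+3-u2^+3)*(u1^+3-u3^+3)*(u2^+3-u3^+3)))).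
    by field; rewrite ?e12 ?e13 ?e23 ?e21 ?e31 ?e32 ?nz1 ?nz2 ?nz3.
  rewrite (_ : (u2*u3)^+2*(u2^+3-u3^+3) - (u1*u3)^+2*(u1^+3-u3^+3) + (u1*u2)^+2*(u1^+3-u2^+3) =
    (u1-u2)*(u1-u3)*(u2-u3)*((u1+u2+u3)^+2*(u1*u2+u1*u3+u2*u3) - (u1*u2+u1*u3+u2*u3)^+2 - (u1+u2+u3)*(u1*u2*u3))); last by ring.
  have tz : (t^+2)^+2*t - t^+2 - t^+2*1 = 0.
    transitivity (t^+2*(t^+3-2)); first ring. by rewrite ht subrr mulr0.
  by rewrite h1 h2 h3 tz mulr0 mul0r.
Qed.
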